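(* Let $T$ be a tree with root $r$, edges directed towards $r$, let $c:V(T)\to\mathbb{Z}$, and let $X$ be an edge set of $T$ that is legal for $c$. Then there is a rayless $X'\subseteq X$ such that (1) $A(v,X')\ge c(v)$ for all vertices $v$ with $A(v,X)\ge c(v)$; and (2) $A(v,X')=A(v,X)$ for all $v\in ter(X)$.
   Context: Edges are ordered pairs $st$ pointing from $s$ to $t$, directed towards $r$; a leaf is a vertex with no incoming edges. For an edge set $X$, $V(X)$ is the set of vertices incident with an edge of $X$, and $ter(X)$ is the set of vertices $s$ such that there is no vertex $t$ with $st\in X$. $A(v,X)$ is the number of edges of $X$ pointing to $v$ minus the number pointing away from $v$. An edge set is \emph{rayless} if it contains no ray. A \emph{leafless forest} is an edge set $S$ such that the subforest $(V(S),S)$ of $T$ has no leaf (no vertex without an incoming edge of $S$). Given $c$, a subset $S\subseteq X$ is \emph{illegal} for $c$ if $S$ is a leafless forest and $A(s,X\setminus S)\le c(s)$ for all $st\in S$; $X$ is \emph{legal} for $c$ if no nonempty subset of $X$ is illegal for $c$. *)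

(* Defs.v *)
From Stdlib Require Import ZArith List.
Import ListNotations.
Open Scope Z_scope.

(* A rooted tree on vertex type V with root r: every vertex v <> r has a
   unique parent [par v]; the edges are the pairs (v, par v) with v <> r,
   directed towards r; [par r = r] is a dummy value (not an edge), and
   every vertex reaches r after finitely many parent steps (connected, acyclic). *)
Definition rooted_tree {V : Type} (r : V) (par : V -> V) : Prop :=
  par r = r /\ forall v, exists n : nat, Nat.iter n par v = r.

Definition tedge {V : Type} (r : V) (par : V -> V) (s t : V) : Prop :=
  s <> r /\ t = par s.

Definition edge_set {V : Type} (r : V) (par : V -> V) (X : V -> V -> Prop) : Prop :=
  forall s t, X s t -> tedge r par s t.

Definition subrel {V : Type} (X Y : V -> V -> Prop) : Prop :=
  forall s t, X s t -> Y s t.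

Definition setminus {V : Type} (X S : V -> V -> Prop) : V -> V -> Prop :=
  fun s t => X s t /\ ~ S s t.

Definition VX {V : Type} (X : V -> V -> Prop) (v : V) : Prop :=
  exists w, X v w \/ X w v.

Definition ter {V : Type} (X : V -> V -> Prop) (s : V) : Prop :=
  ~ exists t, X s t.

Definition rayless {V : Type} (X : V -> V -> Prop) : Prop :=
  ~ exists x : nat -> V,
      (forall i j, x i = x j -> i = j) /\
      (forall i, X (x i) (x (S i)) \/ X (x (S i)) (x i)).

(* Counting incoming edges (possibly infinitely many). *)
Definition in_ge {V : Type} (X : V -> V -> Prop) (v : V) (n : nat) : Prop :=
  exists l : list V, NoDup l /\ length l = n /\ forall s, In s l -> X s v.

Definition in_le {V : Type} (X : V -> V -> Prop) (v : V) (n : nat) : Prop :=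
  forall l : list V, NoDup l -> (forall s, In s l -> X s v) -> (length l <= n)%nat.

(* number of edges of X pointing away from v (0 or 1 in a tree) *)
Definition out_is {V : Type} (X : V -> V -> Prop) (v : V) (o : Z) : Prop :=
  (o = 1 /\ exists t, X v t) \/ (o = 0 /\ ~ exists t, X v t).

(* A(v,X) >= z   (true if infinitely many edges of X point to v) *)
Definition A_ge {V : Type} (X : V -> V -> Prop) (v : V) (z : Z) : Prop :=
  exists (n : nat) (o : Z), in_ge X v n /\ out_is X v o /\ Z.of_nat n - o >= z.

(* A(v,X) <= z   (false if infinitely many edges of X point to v) *)
Definition A_le {V : Type} (X : V -> V -> Prop) (v : V) (z : Z) : Prop :=
  exists (n : nat) (o : Z), in_le X v n /\ out_is X v o /\ Z.of_nat n - o <= z.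

(* A(v,X) = A(v,Y): same number of outgoing edges and equinumerous
   (in bijection) sets of incoming edges. *)
Definition A_eq {V : Type} (X Y : V -> V -> Prop) (v : V) : Prop :=
  ((exists t, X v t) <-> (exists t, Y v t)) /\
  exists (f : {s : V | X s v} -> {s : V | Y s v})
         (g : {s : V | Y s v} -> {s : V | X s v}),
    (forall a, g (f a) = a) /\ (forall b, f (g b) = b).

Definition leafless_forest {V : Type} (S : V -> V -> Prop) : Prop :=
  forall v, VX S v -> exists s, S s v.

Definition illegal {V : Type} (c : V -> Z) (X S : V -> V -> Prop) : Prop :=
  subrel S X /\ leafless_forest S /\
  forall s t, S s t -> A_le (setminus X S) s (c s).

Definition legal {V : Type} (c : V -> Z) (X : V -> V -> Prop) : Prop :=
  forall S, subrel S X -> (exists s t, S s t) -> ~ illegal c X S.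

(* Main.v *)
Require Import Defs.
From Stdlib Require Import ZArith List Lia Classical ProofIrrelevance.
Import ListNotations.
Open Scope Z_scope.

Fixpoint G {V : Type} (X : V -> V -> Prop) (c : V -> Z) (n : nat) (v : V) : Prop :=
  match n with
  | O => False
  | S n => ~ A_ge X v (c v) \/
      exists l, NoDup l /\ (forall u, In u l -> X u v /\ G X c n u) /\
                c v + 1 <= Z.of_nat (length l)
  end.

Lemma G_mono {V} X c : forall n (v : V), G X c n v -> G X c (S n) v.
Proof.
  induction n; intros v H; [destruct H|].
  destruct H as [H|[l [H1 [H2 H3]]]]; [left; exact H|].
  right; exists l; split; [auto|split; [|auto]]; intros w Hw; destruct (H2 w Hw); auto.
Qed.

Lemma G_mono_le {V} X c : forall n m (v : V), (n <= m)%nat -> G X c n v -> G X c m v.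
Proof.
  intros n m v Hle; induction Hle; auto. intros H; apply G_mono; auto.
Qed.

Lemma G_max {V} X c : forall (l : list V), (forall u, In u l -> exists n, G X c n u) ->
  exists N, forall u, In u l -> G X c N u.
Proof.
  induction l as [|a l IH]; intros H.
  - exists O; intros u [].
  - destruct (H a (or_introl eq_refl)) as [na Ha].
    destruct IH as [N HN]. { intros u Hu; apply H; right; auto. }
    exists (na + N)%nat; intros u [<-|Hu].
    + apply (G_mono_le X c na); [lia|auto].
    + apply (G_mono_le X c N); [lia|auto].
Qed.

Lemma all_safe {V} (c : V -> Z) (X : V -> V -> Prop) (Hlegal : legal c X) :
  forall u t, X u t -> exists n, G X c n u.
Proof.
  intros u0 t0 H0. apply NNPP; intros Hn.
  set (S0 := fun s t => X s t /\ ~ exists n, G X c n s).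
  assert (Hc : forall s, ~ (exists n, G X c n s) -> (exists t, X s t) ->
     A_ge X s (c s) /\ 0 <= c s /\
     forall l, NoDup l -> (forall u, In u l -> X u s /\ exists n, G X c n u) ->
       c s + 1 > Z.of_nat (length l)).
  { intros s Hs [t Ht]. split; [|split].
    - apply NNPP; intros Ha; apply Hs; exists 1%nat; left; auto.
    - apply Z.nlt_ge; intros Hlt; apply Hs; exists 1%nat; right; exists [].
      split; [constructor|split; [intros u []|simpl; lia]].
    - intros l Hnd Hl. apply Z.lt_gt, Z.nle_gt; intros Hle.
      destruct (G_max X c l) as [N HN]. { intros u Hu; apply Hl; auto. }
      apply Hs; exists (S N); right; exists l; split; [auto|split; [|lia]].
      intros u Hu; split; [apply Hl; auto|auto]. }
  apply (Hlegal S0).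
  - intros s t [H _]; auto.
  - exists u0, t0; split; auto.
  - split; [intros s t [H _]; auto|split].
    + intros v [w [[Hvw Hv]|Hwv]]; [|exists w; auto].
      apply NNPP; intros Hno.
      destruct (Hc v Hv (ex_intro _ w Hvw)) as [[n [o [[l [Hnd [Hlen Hl]]] [Ho Hge]]]] [_ Hlt]].
      assert (o = 1) by (destruct Ho as [[? _]|[_ Ho]]; auto; exfalso; apply Ho; eauto).
      subst o. assert (Hq := Hlt l Hnd). enough (c v + 1 > Z.of_nat (length l)) by lia. apply Hq.
      intros u Hu; split; [apply Hl; auto|].
      apply NNPP; intros Hu'; apply Hno; exists u; split; auto; apply Hl; auto.
    + intros s t [Hst Hs].
      destruct (Hc s Hs (ex_intro _ t Hst)) as [_ [Hc0 Hlt]].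
      exists (Z.to_nat (c s)), 0; split; [|split].
      * intros l Hnd Hl.
        assert (Z.of_nat (length l) < c s + 1); [|lia].
        apply Z.gt_lt, Hlt; auto. intros u Hu; destruct (Hl u Hu) as [Hx Hnot].
        split; auto. apply NNPP; intros Hu'; apply Hnot; split; auto.
      * right; split; auto. intros [t' [Ht' Hnot]]; apply Hnot; split; auto.
      * lia.
Qed.

Lemma A_ge_X' {V} (c : V -> Z) (X : V -> V -> Prop) :
  let X' := fun u p => X u p /\ (ter X p \/ exists m, G X c m u /\ ~ G X c m p) in
  forall n v, G X c n v -> A_ge X v (c v) -> A_ge X' v (c v).
Proof.
  intros X' n; induction n; intros v Hg Ha; [destruct Hg|].
  destruct (classic (G X c n v)) as [Hn|Hn]; [apply IHn; auto|].
  destruct Hg as [Hg|[l [Hnd [Hl Hlen]]]]; [contradiction|].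
  destruct (classic (exists t, X' v t)) as [Ho|Ho].
  - exists (length l), 1; split; [|split; [left; auto|lia]].
    exists l; split; [auto|split; [auto|]]. intros u Hu; destruct (Hl u Hu).
    split; auto. right; exists n; auto.
  - exists (length l), 0; split; [|split; [right; auto|lia]].
    exists l; split; [auto|split; [auto|]]. intros u Hu; destruct (Hl u Hu).
    split; auto. right; exists n; auto.
Qed.

Theorem lemma2p8 (V : Type) (r : V) (par : V -> V)
  (HT : rooted_tree r par) (c : V -> Z) (X : V -> V -> Prop)
  (HX : edge_set r par X) (Hlegal : legal c X) :
  exists X' : V -> V -> Prop,
    subrel X' X /\ rayless X' /\
    (forall v, A_ge X v (c v) -> A_ge X' v (c v)) /\
    (forall v, ter X v -> A_eq X' X v).
Proof.
  set (X' := fun u p => X u p /\ (ter X p \/ exists m, G X c m u /\ ~ G X c m p)).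
  exists X'. split; [intros s t [H _]; auto|split; [|split]].
  - intros [x [Hinj Hx]].
    assert (Hpar : forall a b, X' a b -> b = par a /\ a <> r).
    { intros a b [Hab _]; destruct (HX a b Hab); auto. }
    set (down := fun i => X' (x (S i)) (x i)).
    assert (Hdd : forall i, down i -> down (S i)).
    { intros i Hd. destruct (Hx (S i)) as [Hu|Hd']; auto.
      apply Hpar in Hu; apply Hpar in Hd. destruct Hu as [Hu _], Hd as [Hd _].
      rewrite <- Hd in Hu. apply Hinj in Hu. lia. }
    assert (Hex : exists k, down k).
    { apply NNPP; intros Hno.
      assert (Hup : forall i, x i = Nat.iter i par (x O) /\ X' (x i) (x (S i))).
      { intros i; induction i.
        - split; auto. destruct (Hx O); auto. exfalso; apply Hno; exists O; auto.
        - destruct IHi as [Hi Hu]. apply Hpar in Hu as Hp. destruct Hp as [Hp _].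
          split. + simpl. rewrite Hp, Hi; auto.
          + destruct (Hx (S i)); auto. exfalso; apply Hno; exists (S i); auto. }
      destruct (proj2 HT (x O)) as [n Hn].
      destruct (Hup n) as [Hi Hu]. apply Hpar in Hu. destruct Hu as [_ Hu].
      apply Hu. rewrite Hi; auto. }
    destruct Hex as [k Hk].
    assert (Hdk : forall j, down (k + j)%nat).
    { intros j; induction j. + rewrite Nat.add_0_r; auto.
      + rewrite Nat.add_succ_r; apply Hdd; auto. }
    set (z := fun i => x (S (k + i))).
    assert (Hout : forall i, exists t, X (z i) t).
    { intros i. destruct (Hdk i) as [H _]. eauto. }
    assert (Hstep : forall i, exists m, G X c m (z (S i)) /\ ~ G X c m (z i)).
    { intros i. pose proof (Hdk (S i)) as Hd. unfold down in Hd.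
      replace (k + S i)%nat with (S (k + i)) in Hd by lia.
      unfold z. replace (k + S i)%nat with (S (k + i)) by lia.
      destruct Hd as [_ [Ht|Hm]].
      - exfalso. apply Ht. apply (Hout i).
      - exact Hm. }
    assert (HP : forall n i, ~ G X c n (z i)).
    { intros n; induction n; intros i Hg; [destruct Hg|].
      destruct (Hstep i) as [m [Hm1 Hm2]].
      destruct (le_lt_dec m n) as [Hle|Hlt].
      - apply (IHn (S i)). apply (G_mono_le X c m); auto.
      - apply Hm2. apply (G_mono_le X c (S n)); auto. }
    destruct (Hout O) as [t Ht]. destruct (all_safe c X Hlegal _ _ Ht) as [n Hn].
    apply (HP n O); auto.
  - intros v Ha. destruct (classic (ter X v)) as [Hter|Hnt].
    + destruct Ha as [n [o [[l [Hnd [Hlen Hl]]] [Ho Hge]]]].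
      exists n, o; split; [exists l; split; [auto|split; [auto|]]|split].
      * intros s Hs; split; auto.
      * destruct Ho as [[? [t Ht]]|[? _]]; [exfalso; apply Hter; eauto|].
        right; split; auto. intros [t [Ht _]]; apply Hter; eauto.
      * auto.
    + apply NNPP in Hnt. destruct Hnt as [t Ht].
      destruct (all_safe c X Hlegal _ _ Ht) as [n Hn].
      exact (A_ge_X' c X n v Hn Ha).
  - intros v Hter. split.
    + split; [intros [t [Ht _]]; eauto|intros [t Ht]; exfalso; apply Hter; eauto].
    + unshelve eexists (fun a => exist _ (proj1_sig a) _), (fun b => exist _ (proj1_sig b) _).
      * exact (proj1 (proj2_sig a)).
      * exact (conj (proj2_sig b) (or_introl Hter)).
      * split; intros [s Hs]; simpl; f_equal; apply proof_irrelevance.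
Qed.
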